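(* Let $\tilde A\in\widetilde{SL}(2,\mathbb R)_+$ and let $a<b$ be fixed points of $\tilde A$ such that $\tilde A(x)>x$ for all $x\in U:=(a,b)$. Then every other interval $U'=(a',b')$ with the same property ($a'<b'$ fixed points of $\tilde A$ with $\tilde A(x)>x$ for all $x\in U'$) is of the form $U'=(a+k\pi,b+k\pi)$ for some $k\in\mathbb Z$. Moreover, the projective curves $U/\langle\tilde A\rangle$ and $U'/\langle\tilde A\rangle$ are isomorphic.
   Context: Let $\pi:\mathbb R\to\mathbb{RP}^1$, $\pi(t)=[\cos t:\sin t]$, and $\bar\pi(t)=(\cos t,\sin t)\in S^1$; $SL(2,\mathbb R)$ acts on $S^1$ by $A\cdot v=Av/\|Av\|$. The universal cover $\widetilde{SL}(2,\mathbb R)$ is realized as the group of diffeomorphisms $\tilde A$ of $\mathbb R$ for which there exists $A\in SL(2,\mathbb R)$ with $\bar\pi\circ\tilde A=A\cdot\bar\pi$. $\widetilde{SL}(2,\mathbb R)_+$ denotes the set of $\tilde A\in\widetilde{SL}(2,\mathbb R)$ such that $\tilde A(x)>x$ for at least one $x\in\mathbb R$. Intervals of $\mathbb R$ carry the projective structure pulled back from $\mathbb{RP}^1$ by $\pi$; elements of $\widetilde{SL}(2,\mathbb R)$ act by projective maps, and $\langle\tilde A\rangle$ acts freely and properly on $U$, so $U/\langle\tilde A\rangle$ is a closed projective curve. *)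

(* Defs.v *)
From Stdlib Require Import Reals ZArith.
From Coquelicot Require Import Coquelicot.
Open Scope R_scope.

Definition smooth (f : R -> R) : Prop := forall (n : nat) (x : R), ex_derive_n f n x.

Definition diffeo (f : R -> R) : Prop :=
  exists g : R -> R, (forall x, g (f x) = x) /\ (forall y, f (g y) = y)
                     /\ smooth f /\ smooth g.

(* The action of A = [[p q];[r s]] in SL(2,R) on S^1 : v |-> A v / ||A v||,
   composed with pibar t = (cos t, sin t):  pibar (f t) = A . pibar t. *)
Definition lifts_SL2 (f : R -> R) (p q r s : R) : Prop :=
  p * s - q * r = 1 /\
  forall t : R,
    let u := p * cos t + q * sin t in
    let v := r * cos t + s * sin t in
    cos (f t) = u / sqrt (u ^ 2 + v ^ 2) /\ sin (f t) = v / sqrt (u ^ 2 + v ^ 2).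

(* f is an element of the universal cover  ~SL(2,R)  realized as diffeos of R *)
Definition in_SL2tilde (f : R -> R) : Prop :=
  diffeo f /\ exists p q r s : R, lifts_SL2 f p q r s.

Definition in_SL2tilde_plus (f : R -> R) : Prop :=
  in_SL2tilde f /\ exists x : R, f x > x.

(* x and y lie in the same <f>-orbit: y = f^n x for some integer n *)
Definition same_orbit (f : R -> R) (x y : R) : Prop :=
  exists n : nat, y = Nat.iter n f x \/ x = Nat.iter n f y.

(* phi is projective near x (for the structure pulled back from RP^1 by pi):
   on a neighbourhood of x inside (a,b), pi (phi t) = [M] . pi t for some
   M = [[p q];[r s]] in GL(2,R); equality in RP^1 = vanishing of the 2x2 determinant. *)
Definition loc_projective (phi : R -> R) (a b x : R) : Prop :=
  exists p q r s : R, p * s - q * r <> 0 /\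
  exists eps : R, eps > 0 /\
    forall t : R, a < t < b -> Rabs (t - x) < eps ->
      (p * cos t + q * sin t) * sin (phi t) - (r * cos t + s * sin t) * cos (phi t) = 0.

(* The closed projective curves (a,b)/<f> and (a',b')/<f> are isomorphic:
   there is a continuous, locally projective surjection phi : (a,b) -> (a',b')
   which induces a bijection of <f>-orbits (i.e. a lift to the universal covers
   of a projective isomorphism of the quotient curves). *)
Definition quotient_iso (f : R -> R) (a b a' b' : R) : Prop :=
  exists phi : R -> R,
    (forall x, a < x < b -> a' < phi x < b') /\
    (forall y, a' < y < b' -> exists x, a < x < b /\ phi x = y) /\
    (forall x, a < x < b -> continuity_pt phi x) /\
    (forall x, a < x < b -> loc_projective phi a b x) /\
    (forall x y, a < x < b -> a < y < b ->
        (same_orbit f x y <-> same_orbit f (phi x) (phi y))).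

(* Main.v *)
Require Import Defs.
From Stdlib Require Import Reals ZArith Lra Psatz.
From Coquelicot Require Import Coquelicot.
Open Scope R_scope.

Lemma charpoly p q r s c s1 l : c^2+s1^2=1 -> p*c+q*s1 = l*c -> r*c+s*s1 = l*s1 ->
  (p-l)*(s-l)-q*r = 0.
Proof.
  intros H1 H2 H3.
  set (d := (p-l)*(s-l)-q*r).
  assert (E1 : d*c = 0).
  { replace (d*c) with ((s-l)*((p*c+q*s1) - l*c) - q*((r*c+s*s1) - l*s1)) by (unfold d; ring).
    rewrite H2, H3; ring. }
  assert (E2 : d*s1 = 0).
  { replace (d*s1) with ((p-l)*((r*c+s*s1) - l*s1) - r*((p*c+q*s1) - l*c)) by (unfold d; ring).
    rewrite H2, H3; ring. }
  replace d with (c*(d*c) + s1*(d*s1)) by (rewrite <- (Rmult_1_r d) at 3; rewrite <- H1; ring).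
  rewrite E1, E2; ring.
Qed.

Lemma eig_contra p q r s c1 s1 c2 s2 N1 N2 : p*s-q*r=1 -> c1^2+s1^2=1 -> c2^2+s2^2=1 ->
  0<N1 -> 0<N2 -> p*c1+q*s1 = N1*c1 -> r*c1+s*s1 = N1*s1 ->
  p*c2+q*s2 = -N2*c2 -> r*c2+s*s2 = -N2*s2 -> False.
Proof.
  intros Hd H1 H2 P1 P2 E1 E2 E3 E4.
  pose proof (charpoly _ _ _ _ _ _ _ H1 E1 E2) as C1.
  pose proof (charpoly _ _ _ _ _ _ _ H2 E3 E4) as C2.
  assert (T1 : (p+s)*N1 = 1 + N1^2) by nra.
  assert (T2 : (p+s)*N2 = -(1 + N2^2)) by nra.
  nra.
Qed.

Lemma same_angle x y : -PI<x<PI -> -PI<y<PI -> cos x = cos y -> sin x = sin y -> x = y.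
Proof.
  intros Hx Hy Hc Hs.
  assert (C : cos (x - y) = 1).
  { rewrite cos_minus, Hc, Hs. pose proof (sin2_cos2 y). unfold Rsqr in H. lra. }
  assert (S : sin ((x-y)/2) * sin ((x-y)/2) = 0).
  { pose proof (cos_2a_sin ((x-y)/2)). replace (2*((x-y)/2)) with (x-y) in H by field. lra. }
  assert (S0 : sin ((x-y)/2) = 0) by nra.
  destruct (Rtotal_order ((x-y)/2) 0) as [Hl|[He|Hg]].
  - pose proof (sin_lt_0_var ((x-y)/2)). lra.
  - lra.
  - pose proof (sin_gt_0 ((x-y)/2)). lra.
Qed.

Lemma lift_uv A p q r s (H: lifts_SL2 A p q r s) t :
  0 < sqrt ((p*cos t+q*sin t)^2+(r*cos t+s*sin t)^2) /\
  p*cos t+q*sin t = sqrt ((p*cos t+q*sin t)^2+(r*cos t+s*sin t)^2) * cos (A t) /\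
  r*cos t+s*sin t = sqrt ((p*cos t+q*sin t)^2+(r*cos t+s*sin t)^2) * sin (A t).
Proof.
  destruct H as [Hd H]. destruct (H t) as [Hc Hs]. simpl in Hc, Hs.
  set (u := p*cos t+q*sin t) in *. set (v := r*cos t+s*sin t) in *.
  assert (Pos : 0 < u^2+v^2).
  { destruct (Rle_or_lt (u^2+v^2) 0) as [Hle|]; [|assumption].
    exfalso. assert (U0 : u = 0) by nra. assert (V0 : v = 0) by nra.
    assert (Ct : cos t = s*u - q*v) by (unfold u, v; rewrite <- (Rmult_1_l (cos t)) at 1; rewrite <- Hd; ring).
    assert (St : sin t = p*v - r*u) by (unfold u, v; rewrite <- (Rmult_1_l (sin t)) at 1; rewrite <- Hd; ring).
    rewrite U0, V0 in Ct, St. pose proof (sin2_cos2 t). unfold Rsqr in *. rewrite Ct, St in *. lra. }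
  pose proof (sqrt_lt_R0 _ Pos) as Np.
  split; [exact Np|]. rewrite Hc, Hs. replace (u*(u*1)+v*(v*1)) with (u^2+v^2) by ring. split; field; lra.
Qed.

Lemma E_eq A p q r s (H: lifts_SL2 A p q r s) t :
  (r*cos t + s*sin t)*cos t - (p*cos t + q*sin t)*sin t =
  sqrt ((p*cos t+q*sin t)^2+(r*cos t+s*sin t)^2) * sin (A t - t).
Proof.
  destruct (lift_uv A p q r s H t) as [_ [Hu Hv]].
  set (N := sqrt _) in *. rewrite sin_minus. rewrite Hu, Hv. ring.
Qed.

Lemma D_bound A p q r s (H: lifts_SL2 A p q r s) (HC : continuity A) a (Ha : A a = a) :
  forall t, -PI < A t - t < PI.
Proof.
  assert (HD : continuity (fun t => A t - t)).
  { intro x. apply (continuity_pt_minus A (fun t => t)); [apply HC|apply continuity_pt_id]. }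
  assert (NE : forall t1, cos (A t1) = - cos t1 -> sin (A t1) = - sin t1 -> False).
  { intros t1 C1 S1.
    destruct (lift_uv A p q r s H a) as [Pa [Ua Va]].
    destruct (lift_uv A p q r s H t1) as [P1 [U1 V1]].
    rewrite Ha in Ua, Va. rewrite C1 in U1. rewrite S1 in V1.
    pose proof (sin2_cos2 a). pose proof (sin2_cos2 t1). unfold Rsqr in *.
    apply (eig_contra p q r s (cos a) (sin a) (cos t1) (sin t1) _ _ (proj1 H)
      ltac:(lra) ltac:(lra) Pa P1); [rewrite Ua at 1; ring | rewrite Va at 1; ring
      | rewrite U1 at 1; ring | rewrite V1 at 1; ring]. }
  intro t. split.
  - destruct (Rlt_or_le (-PI) (A t - t)) as [|Hle]; [assumption|exfalso].
    destruct (IVT_gen (fun t => A t - t) a t (-PI) HD) as [t1 [_ Ht1]].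
    { rewrite Ha. replace (a - a) with 0 by ring. pose proof PI_RGT_0.
      unfold Rmin, Rmax; destruct Rle_dec; lra. }
    apply (NE t1).
    + replace (A t1) with (t1 - PI) by lra. rewrite cos_minus, cos_PI, sin_PI; ring.
    + replace (A t1) with (t1 - PI) by lra. rewrite sin_minus, cos_PI, sin_PI; ring.
  - destruct (Rlt_or_le (A t - t) PI) as [|Hle]; [assumption|exfalso].
    destruct (IVT_gen (fun t => A t - t) a t PI HD) as [t1 [_ Ht1]].
    { rewrite Ha. replace (a - a) with 0 by ring. pose proof PI_RGT_0.
      unfold Rmin, Rmax; destruct Rle_dec; lra. }
    apply (NE t1).
    + replace (A t1) with (t1 + PI) by lra. apply neg_cos.
    + replace (A t1) with (t1 + PI) by lra. apply neg_sin.
Qed.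

Lemma D_per A p q r s (H: lifts_SL2 A p q r s) (HC : continuity A) a (Ha : A a = a) :
  forall t, A (t + PI) = A t + PI.
Proof.
  intro t.
  pose proof (D_bound A p q r s H HC a Ha) as B.
  destruct (lift_uv A p q r s H t) as [P [U V]].
  destruct (lift_uv A p q r s H (t+PI)) as [P' [U' V']].
  rewrite neg_cos, neg_sin in P', U', V'.
  replace ((p * - cos t + q * - sin t) ^ 2 + (r * - cos t + s * - sin t) ^ 2)
    with ((p * cos t + q * sin t) ^ 2 + (r * cos t + s * sin t) ^ 2) in P', U', V' by ring.
  set (N := sqrt _) in *.
  assert (C : cos (A (t+PI)) = - cos (A t)).
  { apply (Rmult_eq_reg_l N); [|lra]. nra. }
  assert (S : sin (A (t+PI)) = - sin (A t)).
  { apply (Rmult_eq_reg_l N); [|lra]. nra. }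
  assert (Eq : A (t+PI) - (t+PI) = A t - t).
  { apply same_angle; [apply B|apply B| |].
    - rewrite !cos_minus, C, neg_cos, neg_sin, S. ring.
    - rewrite !sin_minus, C, neg_cos, neg_sin, S. ring. }
  lra.
Qed.

Lemma shiftN A (HP : forall t, A (t + PI) = A t + PI) :
  forall n x, A (x + INR n * PI) = A x + INR n * PI.
Proof.
  induction n; intro x.
  - simpl. rewrite !Rmult_0_l, !Rplus_0_r. reflexivity.
  - rewrite S_INR. replace (x + (INR n + 1) * PI) with ((x + INR n * PI) + PI) by ring.
    rewrite HP, IHn. ring.
Qed.

Lemma shiftZ A (HP : forall t, A (t + PI) = A t + PI) :
  forall k x, A (x + IZR k * PI) = A x + IZR k * PI.
Proof.
  intros k x. destruct (Z_le_gt_dec 0 k) as [Hk|Hk].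
  - rewrite <- (Z2Nat.id k Hk), <- INR_IZR_INZ. apply shiftN, HP.
  - assert (Hk' : (0 <= -k)%Z) by lia.
    assert (E : IZR k = - INR (Z.to_nat (-k))).
    { rewrite INR_IZR_INZ, Z2Nat.id by exact Hk'. rewrite opp_IZR. ring. }
    rewrite E.
    pose proof (shiftN A HP (Z.to_nat (-k)) (x + - INR (Z.to_nat (- k)) * PI)) as S.
    replace (x + - INR (Z.to_nat (- k)) * PI + INR (Z.to_nat (- k)) * PI) with x in S by ring.
    lra.
Qed.
Lemma pos_prod x y : 0 < x -> 0 < x*y -> 0 < y.
Proof. intros. nra. Qed.

Lemma core A p q r s (H: lifts_SL2 A p q r s) (HC : continuity A) a b a2 b2 :
  a<b -> A a = a -> A b = b -> (forall x, a<x<b -> A x > x) ->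
  a2<b2 -> A a2 = a2 -> A b2 = b2 -> (forall x, a2<x<b2 -> A x > x) ->
  a <= a2 < a + PI -> a2 = a /\ b2 = b.
Proof.
  intros Hab Ha Hb HU Hab2 Ha2 Hb2 HU2 [Hl Hr].
  pose proof (D_bound A p q r s H HC a Ha) as B.
  set (Ef := fun t => (r*cos t + s*sin t)*cos t - (p*cos t + q*sin t)*sin t).
  assert (Epos : forall x, A x > x -> Ef x > 0).
  { intros x Hx. unfold Ef. rewrite (E_eq A p q r s H x).
    destruct (lift_uv A p q r s H x) as [P _].
    pose proof (sin_gt_0 (A x - x) ltac:(lra) ltac:(apply B)). nra. }
  assert (Ez : forall x, A x = x -> Ef x = 0).
  { intros x Hx. unfold Ef. rewrite (E_eq A p q r s H x).
    replace (A x - x) with 0 by lra. rewrite sin_0. ring. }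
  destruct (Rle_lt_or_eq_dec a a2 Hl) as [Hlt|Heq].
  2:{ subst a2. split; [reflexivity|].
      destruct (Rtotal_order b b2) as [H1|[H1|H1]]; [|exact (eq_sym H1)|].
      - pose proof (HU2 b ltac:(lra)). lra.
      - pose proof (HU b2 ltac:(lra)). lra. }
  exfalso.
  set (ca := cos a). set (sa := sin a).
  set (be := -2*r*ca*sa + (s-p)*(ca*ca - sa*sa) - 2*q*sa*ca).
  set (ga := r*sa*sa - (s-p)*sa*ca - q*ca*ca).
  assert (Exp : forall w, Ef (a+w) = Ef a * (cos w)^2 + be * cos w * sin w + ga * (sin w)^2).
  { intro w. unfold Ef, be, ga, ca, sa. rewrite cos_plus, sin_plus. ring. }
  rewrite (Ez a Ha) in Exp.
  set (L := fun w => be * cos w + ga * sin w).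
  assert (EL : forall w, Ef (a+w) = sin w * L w).
  { intro w. rewrite Exp. unfold L. ring. }
  assert (Id : forall w w0, L w * sin w0 - L w0 * sin w = be * sin (w0 - w)).
  { intros w w0. unfold L. rewrite sin_minus. ring. }
  set (w0 := a2 - a).
  set (w1 := Rmin (b-a) w0 / 2).
  set (w2 := w0 + Rmin (b2-a2) (PI - w0) / 2).
  assert (Hw1 : 0 < w1 < w0 /\ w1 < b - a) by (unfold w1, w0, Rmin; destruct Rle_dec; lra).
  assert (Hw2 : w0 < w2 < PI /\ w2 < b2 - a2 + w0) by (unfold w2, w0, Rmin; destruct Rle_dec; lra).
  assert (Sw0 : 0 < sin w0) by (apply sin_gt_0; unfold w0; lra).
  assert (Sw1 : 0 < sin w1) by (apply sin_gt_0; lra).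
  assert (Sw2 : 0 < sin w2) by (apply sin_gt_0; lra).
  assert (L0 : L w0 = 0).
  { pose proof (EL w0) as E0. replace (a + w0) with a2 in E0 by (unfold w0; ring).
    rewrite (Ez a2 Ha2) in E0. nra. }
  assert (L1 : L w1 > 0).
  { pose proof (EL w1) as E1. pose proof (Epos (a + w1) (HU (a+w1) ltac:(lra))) as P. rewrite E1 in P. exact (pos_prod _ _ Sw1 P). }
  assert (L2 : L w2 > 0).
  { pose proof (EL w2) as E2. pose proof (Epos (a + w2) (HU2 (a+w2) ltac:(unfold w0 in *; lra))) as P. rewrite E2 in P. exact (pos_prod _ _ Sw2 P). }
  assert (S1 : 0 < sin (w0 - w1)) by (apply sin_gt_0; lra).
  assert (S2 : sin (w0 - w2) < 0) by (apply sin_lt_0_var; lra).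
  pose proof (Id w1 w0) as I1. pose proof (Id w2 w0) as I2.
  rewrite L0 in I1, I2.
  assert (be > 0) by nra.
  nra.
Qed.

Theorem mainTheorem8 (A : R -> R) (HA : in_SL2tilde_plus A)
  (a b : R) (Hab : a < b) (Ha : A a = a) (Hb : A b = b)
  (HU : forall x, a < x < b -> A x > x) :
  forall a' b' : R, a' < b' -> A a' = a' -> A b' = b' ->
    (forall x, a' < x < b' -> A x > x) ->
    (exists k : Z, a' = a + IZR k * PI /\ b' = b + IZR k * PI) /\
    quotient_iso A a b a' b'.
Proof.
  intros a' b' Hab' Ha' Hb' HU'.
  destruct HA as [[Hdiff [p [q [r [s Hl]]]]] _].
  assert (HC : continuity A).
  { destruct Hdiff as [g [_ [_ [Hsm _]]]]. intro x.
    apply continuity_pt_filterlim. exact (@ex_derive_continuous R_AbsRing R_NormedModule A x (Hsm 1%nat x)). }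
  pose proof (D_per A p q r s Hl HC a Ha) as HP.
  pose proof (shiftZ A HP) as SZ.
  set (z := (a'-a)/PI).
  destruct (archimed z) as [Z1 Z2].
  set (k := (up z - 1)%Z).
  assert (Kd : IZR k = IZR (up z) - 1) by (unfold k; rewrite minus_IZR; reflexivity).
  pose proof PI_RGT_0 as Ppos.
  assert (Zd : z * PI = a' - a) by (unfold z; field; lra).
  set (a2 := a' + IZR (-k) * PI). set (b2 := b' + IZR (-k) * PI).
  assert (Nk : IZR (-k) = - IZR k) by apply opp_IZR.
  assert (Ha2 : A a2 = a2) by (unfold a2; rewrite SZ, Ha'; reflexivity).
  assert (Hb2 : A b2 = b2) by (unfold b2; rewrite SZ, Hb'; reflexivity).
  assert (HU2 : forall x, a2 < x < b2 -> A x > x).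
  { intros x Hx. replace x with ((x + IZR k * PI) + IZR (-k) * PI) by (rewrite Nk; ring).
    rewrite SZ. pose proof (HU' (x + IZR k * PI)) as HH.
    unfold a2, b2 in Hx. rewrite Nk in Hx. specialize (HH ltac:(lra)). lra. }
  assert (Rng : a <= a2 < a + PI).
  { unfold a2. rewrite Nk, Kd. split; nra. }
  destruct (core A p q r s Hl HC a b a2 b2 Hab Ha Hb HU ltac:(unfold a2, b2; lra)
             Ha2 Hb2 HU2 Rng) as [E1 E2].
  unfold a2, b2 in E1, E2. rewrite Nk in E1, E2.
  assert (Ea : a' = a + IZR k * PI) by lra.
  assert (Eb : b' = b + IZR k * PI) by lra.
  split; [exists k; split; assumption|].
  exists (fun x => x + IZR k * PI).
  split; [intros x Hx; lra|].
  split; [intros y Hy; exists (y - IZR k * PI); split; [lra|ring]|].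
  split.
  { intros x _. apply (continuity_pt_plus (fun x => x) (fun _ => IZR k * PI)).
    - apply continuity_pt_id.
    - apply continuity_pt_const. intros u v; reflexivity. }
  split.
  { intros x _. exists 1, 0, 0, 1. split; [lra|]. exists 1. split; [lra|].
    intros t _ _.
    replace ((1 * cos t + 0 * sin t) * sin (t + IZR k * PI) - (0 * cos t + 1 * sin t) * cos (t + IZR k * PI))
      with (sin ((t + IZR k * PI) - t)) by (rewrite sin_minus; ring).
    replace (t + IZR k * PI - t) with (IZR k * PI) by ring.
    apply sin_eq_0_1. exists k; reflexivity. }
  assert (It : forall n x, Nat.iter n A (x + IZR k * PI) = Nat.iter n A x + IZR k * PI).
  { induction n; intro x; [reflexivity|]. simpl. rewrite IHn. apply SZ. }
  intros x y _ _. unfold same_orbit. split.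
  - intros [n [Hn|Hn]]; exists n; [left|right]; rewrite It; rewrite Hn; reflexivity.
  - intros [n [Hn|Hn]]; exists n; [left|right]; rewrite It in Hn; lra.
Qed.
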